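(* Let $P$ be a finite nonempty set of nonempty linear strings over an ordered finite alphabet $\Sigma$. Let $w_o$ be a shortest linear superstring of $P$, let $c_o$ be a shortest circular superstring of $P\cup\overline P$, and let $c$ be any circular superstring of $P\cup\overline P$. Then $$\frac{|g(c)|}{|w_o|}\le\frac{|c|}{|c_o|}\quad\text{and}\quad \frac{\|P\|-|w_o|}{\|P\|-|g(c)|}\le \frac{\|P\cup\overline P\|-|c_o|}{\|P\cup\overline P\|-|c|}.$$
   Context: $\|Q\|=\sum_{w\in Q}|w|$. Let $\overline\Sigma=\{\overline a:a\in\Sigma\}$ be a disjoint copy of $\Sigma$. The alphabet $\Sigma\cup\overline\Sigma$ is totally ordered so that $a<\overline b$ for all $a\in\Sigma$ and $\overline b\in\overline\Sigma$. For $w=a_1\dots a_k$ over $\Sigma$, set $\overline w=\overline{a_1}\dots\overline{a_k}$, and let $\overline P=\{\overline w:w\in P\}$. A circular string $\langle a_1\dots a_n\rangle$ has length $n$, and its substrings are the finite substrings of $(a_1\dots a_n)^\infty$. Superstrings (linear or circular) contain each string of the given set as a substring. For a circular superstring $c$ of $P\cup\overline P$ of length $k$, let $l(c)$ be the lexicographically smallest among the circular shifts of $c$ (read as linear strings) whose first letter is in $\Sigma$ and whose last letter is in $\overline\Sigma$. For a linear string $w$ and a sub-alphabet $\Sigma''$, $w|_{\Sigma''}$ is the subsequence of letters of $w$ lying in $\Sigma''$. Let $g'(c)$ be whichever of $l(c)|_\Sigma$ and $l(c)|_{\overline\Sigma}$ has minimal length. Then set $g(c)=a_1\dots a_k$ if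 either $g'(c)=a_1\dots a_k\in\Sigma^*$ or $g'(c)=\overline{a_1}\dots\overline{a_k}\in\overline\Sigma^*$. *)

(* Defs.v *)
From mathcomp Require Import all_boot all_order all_algebra.
Set Implicit Arguments. Unset Strict Implicit. Unset Printing Implicit Defensive.
Import Order.TTheory GRing.Theory Num.Theory.

Section Strings.
Context {disp : Order.disp_t} {S : finOrderType disp}.

(* Letters of Sigma ∪ Sigma-bar: (false, a) is a ∈ Sigma, (true, a) is a-bar. *)
Definition xletter := (bool * S)%type.

Definition in_sig (x : xletter) : bool := ~~ x.1.
Definition in_bar (x : xletter) : bool := x.1.

Definition xlt (x y : xletter) : bool :=
  (~~ x.1 && y.1) || ((x.1 == y.1) && (x.2 < y.2)%O).

Fixpoint lexle (s t : seq xletter) : bool :=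
  match s, t with
  | [::], _ => true
  | _ :: _, [::] => false
  | a :: s', b :: t' => xlt a b || ((a == b) && lexle s' t')
  end.

Definition emb (w : seq S) : seq xletter := [seq (false, a) | a <- w].
Definition bar (w : seq S) : seq xletter := [seq (true, a) | a <- w].

Definition norm_set {T : Type} (Q : seq (seq T)) : nat := sumn [seq size w | w <- Q].

(* P ∪ P-bar, as a duplicate-free list (P given as a duplicate-free list) *)
Definition PPbar (P : seq (seq S)) : seq (seq xletter) :=
  undup (map emb P ++ map bar P).

Definition lin_super {T : eqType} (Q : seq (seq T)) (w : seq T) : Prop :=
  forall p, p \in Q -> infix p w.

(* u is a substring of the circular string <c>: a finite substring of c^∞ *)
Definition circ_sub {T : eqType} (u c : seq T) : Prop :=
  exists k, infix u (flatten (nseq k c)).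

(* circular superstring, a circular string being represented by any of its
   linear representatives *)
Definition circ_super {T : eqType} (Q : seq (seq T)) (c : seq T) : Prop :=
  forall p, p \in Q -> circ_sub p c.

Definition lexmin (d : seq xletter) (s : seq (seq xletter)) : seq xletter :=
  foldr (fun t acc => if lexle t acc then t else acc) (head d s) s.

(* l(c): lexicographically smallest circular shift of c whose first letter is
   in Sigma and last letter in Sigma-bar (default c if there is none) *)
Definition lshift (c : seq xletter) : seq xletter :=
  lexmin c [seq r <- [seq rot i c | i <- iota 0 (size c)]
           | match r with
             | [::] => false
             | a :: _ => in_sig a && in_bar (last a r)
             end].

Definition gmap (c : seq xletter) : seq S :=
  let l := lshift c in
  let ls := filter in_sig l in
  let lb := filter in_bar l in
  map snd (if size ls <= size lb then ls else lb).

End Strings.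

(* Main.v *)
Require Import Defs.
From mathcomp Require Import all_boot all_order all_algebra.
From mathcomp Require Import zify.
Import Order.TTheory GRing.Theory Num.Theory.
Local Open Scope ring_scope.

Section Aux.
Context {disp : Order.disp_t} {S : finOrderType disp}.

Lemma infix_map (T U : eqType) (f : T -> U) (p w : seq T) :
  infix p w -> infix (map f p) (map f w).
Proof.
move/infixP=> [s [s' ->]]; rewrite !map_cat; exact: infix_infix.
Qed.

Lemma lexmin_size (d : seq (@xletter disp S)) s n :
  size d = n -> (forall r, r \in s -> size r = n) -> size (lexmin d s) = n.
Proof.
move=> Hd Hs; rewrite /lexmin.
have Hh : size (head d s) = n.
  by case: s Hs => [|a s] Hs //=; apply: Hs; rewrite inE eqxx.
move: (head d s) Hh => z Hz.
elim: s Hs => [|a s IH] Hs //=.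
case: ifP => _; first by apply: Hs; rewrite inE eqxx.
apply: IH => // r Hr; apply: Hs; by rewrite inE Hr orbT.
Qed.

Lemma lshift_size (c : seq (@xletter disp S)) : size (Defs.lshift c) = size c.
Proof.
apply: lexmin_size => // r; rewrite mem_filter => /andP[_ /mapP[i _ ->]].
exact: size_rot.
Qed.

Lemma gmap_size (c : seq (@xletter disp S)) : ((size (gmap c)).*2 <= size c)%N.
Proof.
rewrite /gmap size_map -(lshift_size c).
set l := Defs.lshift c.
have E : (size (filter in_sig l) + size (filter in_bar l))%N = size l.
  rewrite !size_filter -(count_predC in_sig l); congr (_ + _)%N.
  by apply: eq_count => x; rewrite /= /in_sig /in_bar negbK.
case: ifP => H; rewrite -E -addnn.
  by rewrite leq_add2l.
by rewrite leq_add2r ltnW // ltnNge H.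
Qed.

Lemma norm_PPbar (P : seq (seq S)) : uniq P -> all (fun w => w != [::]) P ->
  norm_set (PPbar P) = (norm_set P).*2.
Proof.
move=> uP nP; rewrite /PPbar undup_id.
  rewrite /norm_set map_cat sumn_cat -!map_comp.
  have -> : [seq size w | w <- P] = map (size \o (@emb disp S)) P.
    by apply: eq_map => w /=; rewrite size_map.
  have -> : map (size \o (@bar disp S)) P = map (size \o (@emb disp S)) P.
    by apply: eq_map => w /=; rewrite !size_map.
  by rewrite addnn.
rewrite cat_uniq !map_inj_uniq //; last first.
  by move=> x y /(congr1 (map snd)); rewrite -!map_comp !map_id.
  by move=> x y /(congr1 (map snd)); rewrite -!map_comp !map_id.
rewrite uP andbT /=; apply/hasPn => x /mapP[q qP ->]; apply/mapP => -[p pP].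
have : q != [::] by move/allP: nP => /(_ q qP).
by case: q qP => [|a q] //= _ _; case: p pP => [|b p] //= _ [].
Qed.

End Aux.

Theorem lemma6 (disp : Order.disp_t) (S : finOrderType disp)
  (P : seq (seq S)) (w_o : seq S) (c_o c : seq (@xletter disp S)) :
  uniq P -> P != [::] -> all (fun w => w != [::]) P ->
  lin_super P w_o ->
  (forall w, lin_super P w -> (size w_o <= size w)%N) ->
  circ_super (PPbar P) c_o ->
  (forall c', circ_super (PPbar P) c' -> (size c_o <= size c')%N) ->
  circ_super (PPbar P) c ->
  ((size (gmap c))%:R / (size w_o)%:R <= (size c)%:R / (size c_o)%:R :> rat)
  /\
  ((size c < norm_set (PPbar P))%N ->
   ((norm_set P)%:R - (size w_o)%:R) / ((norm_set P)%:R - (size (gmap c))%:R)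
   <= ((norm_set (PPbar P))%:R - (size c_o)%:R)
      / ((norm_set (PPbar P))%:R - (size c)%:R) :> rat).
Proof.
move=> uP nP neP sw mw sco mco sc.
have Hg := gmap_size c.
have Hcc : (size c_o <= size c)%N by apply: mco.
have Hc2 : (size c_o <= (size w_o).*2)%N.
  have -> : (size w_o).*2 = size (emb w_o ++ bar w_o).
    by rewrite size_cat !size_map addnn.
  apply: mco => q; rewrite /PPbar mem_undup mem_cat => /orP[] /mapP[p pP ->];
    exists 1%N; rewrite /= cats0.
    by apply: infix_catr; apply: infix_map; apply: sw.
  by apply: infix_catl; apply: infix_map; apply: sw.
case: P nP uP neP sw mw sco mco sc Hcc Hc2 => [|p0 P0] // _ uP neP sw mw sco mco sc Hcc Hc2.
have p0ne : p0 != [::] by move/allP: neP => /(_ p0); rewrite inE eqxx => /(_ isT).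
have Hw : (0 < size w_o)%N.
  have := size_infix (sw p0 (mem_head _ _)).
  have : (0 < size p0)%N by case: (p0) p0ne.
  by move=> H1 H2; apply: leq_trans H1 H2.
have Hco : (0 < size c_o)%N.
  have : emb p0 \in PPbar (p0 :: P0) by rewrite /PPbar mem_undup mem_cat mem_head.
  move/sco=> [k]; case: (c_o) => [|a s] //=.
  rewrite (_ : flatten (nseq k [::]) = [::]); last by elim: k.
  by case: (p0) p0ne.
split.
  rewrite ler_pdivrMr ?ltr0n // mulrAC ler_pdivlMr ?ltr0n //.
  rewrite -!natrM ler_nat; nia.
rewrite norm_PPbar // => Hlt.
set N := norm_set (p0 :: P0) in Hlt *.
rewrite -!muln2 in Hlt *.
have Hb : (0 : rat) < N%:R - (size (gmap c))%:R.
  rewrite subr_gt0 ltr_nat; lia.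
have HB : (0 : rat) < (N * 2)%:R - (size c)%:R.
  rewrite subr_gt0 ltr_nat; lia.
rewrite ler_pdivrMr // mulrAC ler_pdivlMr //.
have h1 : (N * 2)%:R - (size c)%:R <= 2 * (N%:R - (size (gmap c))%:R) :> rat.
  rewrite mulrBr -!natrM; apply: lerB; rewrite ler_nat; lia.
have h2 : 2 * (N%:R - (size w_o)%:R) <= (N * 2)%:R - (size c_o)%:R :> rat.
  rewrite mulrBr -!natrM; apply: lerB; rewrite ler_nat; lia.
have h3 : (N * 2)%:R - (size c)%:R <= (N * 2)%:R - (size c_o)%:R :> rat.
  by apply: lerB; rewrite ?lexx ?ler_nat.
set a := (N%:R - (size w_o)%:R : rat) in h2 *.
set b := (N%:R - (size (gmap c))%:R : rat) in h1 Hb *.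
set A := ((N * 2)%:R - (size c_o)%:R : rat) in h2 h3 *.
set B := ((N * 2)%:R - (size c)%:R : rat) in h1 h3 HB *.
case: (lerP a 0) => ha.
  apply: (le_trans (y := 0)); first by rewrite mulr_le0_ge0 // ltW.
  by rewrite mulr_ge0 // ltW // (lt_le_trans HB h3).
apply: (le_trans (y := a * (2 * b))); first by rewrite ler_wpM2l // ltW.
rewrite mulrA [a * 2]mulrC; apply: ler_wpM2r => //; exact: ltW.
Qed.
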